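(* Let $G$ be a group, $g\in[G,G]$, let $m\ge 1$, let $g_1,\dots,g_m$ be conjugates of $g$ in $G$, and let $n_1,\dots,n_m$ be integers. Unless $m=1$ and $g_1^{n_1}=1$, we have $$\mathrm{cl}_G(g_1^{n_1}g_2^{n_2}\cdots g_m^{n_m})\ \ge\ \mathrm{scl}_G(g)\left|\sum_{i=1}^m n_i\right|-\frac{m}{2}+1.$$
   Context: For a group $G$, $[G,G]$ is its commutator subgroup. For $h\in[G,G]$, the commutator length $\mathrm{cl}_G(h)$ is the least $n\ge 0$ such that $h=[a_1,b_1]\cdots[a_n,b_n]$ for some $a_i,b_i\in G$. The stable commutator length is $\mathrm{scl}_G(g)=\lim_{n\to\infty}\mathrm{cl}_G(g^n)/n$ for $g\in[G,G]$. Note that a product of conjugates of $g\in[G,G]$ lies in $[G,G]$. *)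

(* Defs.v *)
From Stdlib Require Import Reals ZArith List Arith.
Open Scope R_scope.

Record Group := {
  carrier :> Type;
  gmul : carrier -> carrier -> carrier;
  gone : carrier;
  ginv : carrier -> carrier;
  gmul_assoc : forall a b c, gmul a (gmul b c) = gmul (gmul a b) c;
  gmul_1l : forall a, gmul gone a = a;
  gmul_Vl : forall a, gmul (ginv a) a = gone
}.

Arguments gmul {g} _ _.
Arguments gone {g}.
Arguments ginv {g} _.

Section GroupDefs.
Variable G : Group.

Definition gcomm (a b : G) : G := gmul (gmul (ginv a) (ginv b)) (gmul a b).

Definition gconj (g x : G) : G := gmul (ginv x) (gmul g x).

Fixpoint npow (x : G) (n : nat) : G :=
  match n with O => gone | S k => gmul x (npow x k) end.

Definition zpow (x : G) (z : Z) : G :=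
  match z with
  | Z0 => gone
  | Zpos p => npow x (Pos.to_nat p)
  | Zneg p => ginv (npow x (Pos.to_nat p))
  end.

Definition prod_comms (l : list (G * G)) : G :=
  fold_right (fun p acc => gmul (gcomm (fst p) (snd p)) acc) gone l.

Definition is_prod_comm (h : G) (n : nat) : Prop :=
  exists l : list (G * G), length l = n /\ prod_comms l = h.

Definition in_commutator_subgroup (h : G) : Prop := exists n, is_prod_comm h n.

Definition cl_is (h : G) (k : nat) : Prop :=
  is_prod_comm h k /\ forall j, is_prod_comm h j -> (k <= j)%nat.

Definition scl_is (g : G) (s : R) : Prop :=
  exists c : nat -> nat,
    (forall n, cl_is (npow g (S n)) (c n)) /\
    Un_cv (fun n => INR (c n) / INR (S n)) s.

Definition gprod (f : nat -> G) (m : nat) : G :=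
  fold_right (fun i acc => gmul (f i) acc) gone (seq 0 m).

End GroupDefs.

Arguments gcomm {G} _ _.
Arguments gconj {G} _ _.
Arguments npow {G} _ _.
Arguments zpow {G} _ _.
Arguments is_prod_comm {G} _ _.
Arguments in_commutator_subgroup {G} _.
Arguments cl_is {G} _ _.
Arguments scl_is {G} _ _.
Arguments gprod {G} _ _.

Definition zsum (n : nat -> Z) (m : nat) : Z :=
  fold_right Z.add 0%Z (map n (seq 0 m)).

(* Main.v *)
Require Import Defs.
From Stdlib Require Import Reals ZArith List Arith Lia Lra Psatz.

Section Grp.
Variable G : Group.
Local Notation "x ⋆ y" := (@gmul G x y) (at level 40, left associativity).
Local Notation "1" := (@gone G).

Lemma idem_one (x : G) : x ⋆ x = x -> x = 1.
Proof. intro H. transitivity (ginv x ⋆ x ⋆ x).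
  - rewrite gmul_Vl, gmul_1l. reflexivity.
  - rewrite <- gmul_assoc, H, gmul_Vl. reflexivity. Qed.
Lemma mulrV (x : G) : x ⋆ ginv x = 1.
Proof. apply idem_one. rewrite <- gmul_assoc, (gmul_assoc G (ginv x)), gmul_Vl, gmul_1l. reflexivity. Qed.
Lemma mul1r (x : G) : x ⋆ 1 = x.
Proof. rewrite <- (gmul_Vl G x), gmul_assoc, mulrV, gmul_1l. reflexivity. Qed.
Lemma inv_uniq (a b : G) : a ⋆ b = 1 -> b = ginv a.
Proof. intro H. rewrite <- (gmul_1l G b), <- (gmul_Vl G a), <- gmul_assoc, H, mul1r. reflexivity. Qed.
Lemma ginv_inv (a : G) : ginv (ginv a) = a.
Proof. symmetry. apply inv_uniq. apply gmul_Vl. Qed.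
Lemma ginv_mul (a b : G) : ginv (a ⋆ b) = ginv b ⋆ ginv a.
Proof. symmetry. apply inv_uniq. rewrite <- gmul_assoc, (gmul_assoc G b), mulrV, gmul_1l, mulrV. reflexivity. Qed.
Lemma ginv_one : ginv (@gone G) = 1.
Proof. symmetry. apply inv_uniq. apply gmul_1l. Qed.
Lemma mulVl_r (a x : G) : ginv a ⋆ (a ⋆ x) = x.
Proof. rewrite gmul_assoc, gmul_Vl, gmul_1l. reflexivity. Qed.
Lemma mulrV_r (a x : G) : a ⋆ (ginv a ⋆ x) = x.
Proof. rewrite gmul_assoc, mulrV, gmul_1l. reflexivity. Qed.

End Grp.

Ltac gnorm := unfold gcomm, gconj in *; repeat progress (rewrite ?ginv_mul, ?ginv_inv, ?ginv_one, ?gmul_1l, ?mul1r, ?mulVl_r, ?mulrV_r, ?gmul_Vl, ?mulrV, <- ?gmul_assoc).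

Section Pow.
Variable G : Group.
Local Notation "x ⋆ y" := (@gmul G x y) (at level 40, left associativity).
Local Notation "1" := (@gone G).

Lemma npow_comm (x : G) n : npow x n ⋆ x = x ⋆ npow x n.
Proof. induction n; simpl. - rewrite gmul_1l, mul1r. auto. - rewrite <- gmul_assoc, IHn. auto. Qed.
Lemma npow_add (x : G) a b : npow x (a + b) = npow x a ⋆ npow x b.
Proof. induction a; simpl. - rewrite gmul_1l. auto. - rewrite IHa, gmul_assoc. auto. Qed.
Lemma npow_S_r (x : G) n : npow x (S n) = npow x n ⋆ x.
Proof. simpl. rewrite npow_comm. auto. Qed.
Lemma npow_conj (x y : G) n : npow (gconj x y) n = gconj (npow x n) y.
Proof. induction n; simpl. - gnorm. auto. - rewrite IHn. gnorm. auto. Qed.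
Lemma npow_inv (x : G) n : npow (ginv x) n = ginv (npow x n).
Proof. induction n; simpl. - rewrite ginv_one. auto. - rewrite IHn, <- ginv_mul, npow_comm. auto. Qed.
Lemma zpow_succ (x : G) z : zpow x (Z.succ z) = x ⋆ zpow x z.
Proof.
  destruct z as [|p|p]; simpl.
  - rewrite mul1r. auto.
  - replace (Pos.to_nat (p + 1)) with (S (Pos.to_nat p)) by lia. reflexivity.
  - destruct (Pos.eq_dec p 1) as [->|Hp].
    + simpl. rewrite mul1r, mulrV. auto.
    + replace (Z.pos_sub 1 p) with (Z.neg (Pos.pred p)) by (rewrite Z.pos_sub_lt by lia; f_equal; lia). simpl.
      replace (Pos.to_nat p) with (S (Pos.to_nat (Pos.pred p))) by lia. simpl.
      rewrite <- npow_comm, ginv_mul, mulrV_r. auto.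
Qed.
Lemma zpow_pred (x : G) z : zpow x (Z.pred z) = ginv x ⋆ zpow x z.
Proof. rewrite <- (Z.succ_pred z) at 2. rewrite zpow_succ, mulVl_r. auto. Qed.
Lemma zpow_comm (x : G) z : zpow x z ⋆ x = x ⋆ zpow x z.
Proof. induction z using Z.peano_ind.
  - simpl. rewrite gmul_1l, mul1r. auto.
  - rewrite zpow_succ, <- gmul_assoc, IHz. auto.
  - rewrite zpow_pred. rewrite <- gmul_assoc, IHz. rewrite mulrV_r, mulVl_r. auto. Qed.
Lemma zpow_comm_inv (x : G) z : ginv x ⋆ zpow x z = zpow x z ⋆ ginv x.
Proof. transitivity (ginv x ⋆ (zpow x z ⋆ x) ⋆ ginv x).
  - rewrite <- !gmul_assoc, mulrV, mul1r. auto.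
  - rewrite zpow_comm, mulVl_r. auto. Qed.
Lemma zpow_add (x : G) a b : zpow x (a + b) = zpow x a ⋆ zpow x b.
Proof. induction b using Z.peano_ind.
  - rewrite Z.add_0_r. simpl. rewrite mul1r. auto.
  - rewrite Z.add_succ_r, !zpow_succ, IHb, !gmul_assoc, zpow_comm. auto.
  - rewrite Z.add_pred_r, !zpow_pred, IHb, !gmul_assoc. f_equal.
    apply zpow_comm_inv. Qed.
Lemma zpow_conj (x y : G) z : zpow (gconj x y) z = gconj (zpow x z) y.
Proof. induction z using Z.peano_ind.
  - simpl. gnorm. auto.
  - rewrite !zpow_succ, IHz. gnorm. auto.
  - rewrite !zpow_pred, IHz. gnorm. auto. Qed.
Lemma zpow_nat (x : G) n : zpow x (Z.of_nat n) = npow x n.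
Proof. destruct n; simpl. auto. rewrite SuccNat2Pos.id_succ. auto. Qed.
Lemma zpow_opp (x : G) z : zpow x (- z) = ginv (zpow x z).
Proof. destruct z; simpl. - rewrite ginv_one; auto. - auto. - rewrite ginv_inv; auto. Qed.
Lemma npow_zpow (x : G) z p : npow (zpow x z) p = zpow x (Z.of_nat p * z).
Proof. induction p.
  - simpl. auto.
  - rewrite Nat2Z.inj_succ, Z.mul_succ_l, zpow_add, <- IHp, npow_S_r. auto. Qed.
End Pow.

Definition lecl {G : Group} (x : G) (k : nat) := exists j, (j <= k)%nat /\ is_prod_comm x j.

Section Lecl.
Variable G : Group.
Local Notation "x ⋆ y" := (@gmul G x y) (at level 40, left associativity).
Local Notation "1" := (@gone G).

Lemma prod_comms_app (l1 l2 : list (G * G)) :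
  prod_comms G (l1 ++ l2) = prod_comms G l1 ⋆ prod_comms G l2.
Proof. induction l1; simpl. - rewrite gmul_1l; auto. - rewrite IHl1, gmul_assoc; auto. Qed.

Lemma lecl_one k : lecl (@gone G) k.
Proof. exists 0%nat. split. lia. exists nil. auto. Qed.
Lemma lecl_comm (a b : G) : lecl (gcomm a b) 1.
Proof. exists 1%nat. split. lia. exists ((a,b)::nil). simpl. rewrite mul1r. auto. Qed.
Lemma lecl_mono (x : G) i j : (i <= j)%nat -> lecl x i -> lecl x j.
Proof. intros H [t [Ht Hx]]. exists t. split. lia. auto. Qed.
Lemma lecl_mul (x y : G) i j : lecl x i -> lecl y j -> lecl (x ⋆ y) (i + j).
Proof. intros [t [Ht [l [Hl Hx]]]] [u [Hu [l' [Hl' Hy]]]].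
  exists (t + u)%nat. split. lia. exists (l ++ l'). split.
  - rewrite length_app. lia.
  - rewrite prod_comms_app. subst. auto. Qed.
Lemma lecl_conj (x y : G) i : lecl x i -> lecl (gconj x y) i.
Proof. intros [t [Ht [l [Hl Hx]]]]. exists t. split. auto.
  exists (map (fun p => (gconj (fst p) y, gconj (snd p) y)) l). split.
  - rewrite length_map. auto.
  - subst. clear. induction l; simpl. + gnorm. auto.
    + rewrite IHl. gnorm. auto. Qed.
Lemma lecl_inv (x : G) i : lecl x i -> lecl (ginv x) i.
Proof. intros [t [Ht [l [Hl Hx]]]]. subst. revert i Ht. induction l; intros i Ht; simpl.
  - rewrite ginv_one. apply lecl_one.
  - simpl in Ht. rewrite ginv_mul. replace i with ((i - 1) + 1)%nat by lia.
    apply lecl_mul. apply IHl. lia.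
    replace (ginv (gcomm (fst a) (snd a))) with (gcomm (snd a) (fst a)) by (gnorm; auto).
    apply lecl_comm. Qed.

Definition Pw (a b : G) n := npow a n ⋆ npow b n ⋆ ginv (npow (a ⋆ b) n).

Lemma Pw_step (a b : G) n :
  Pw a b (n + 2) = gconj (gcomm (ginv (a ⋆ (a ⋆ b))) (ginv (npow b n ⋆ ginv a))) (ginv (npow a n)) ⋆ Pw a b n.
Proof. unfold Pw. rewrite (npow_add _ a n 2), (npow_add _ (a ⋆ b) n 2).
  replace (n + 2)%nat with (S (S n)) by lia. rewrite (npow_S_r _ b (S n)).
  cbn [npow]. gnorm. reflexivity. Qed.

Lemma Pw_even (a b : G) q : lecl (Pw a b (2 * q)) q.
Proof. induction q.
  - unfold Pw. simpl. rewrite gmul_1l, ginv_one, gmul_1l. apply lecl_one.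
  - replace (2 * S q)%nat with (2 * q + 2)%nat by lia. rewrite Pw_step.
    replace (S q) with (1 + q)%nat by lia. apply lecl_mul; auto.
    apply lecl_conj, lecl_comm. Qed.

Lemma split2 (a b : G) q : exists P, npow a (2*q) ⋆ npow b (2*q) = P ⋆ npow (a ⋆ b) (2*q) /\ lecl P q.
Proof. exists (Pw a b (2*q)). split. - unfold Pw. gnorm. auto. - apply Pw_even. Qed.

Definition lprod (l : list G) := fold_right (@gmul G) 1 l.

Lemma npow_one n : npow (@gone G) n = 1.
Proof. induction n; simpl; auto. rewrite IHn, gmul_1l. auto. Qed.

Lemma split_pow q (l : list G) : exists E,
  lprod (map (fun u => npow u (2*q)) l) = E ⋆ npow (lprod l) (2*q) /\ lecl E ((length l - 1) * q).
Proof. induction l as [|u l IH].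
  - exists 1. simpl. rewrite npow_one, gmul_1l. split; auto. apply lecl_one.
  - destruct l as [|v l'].
    + exists 1. simpl. rewrite !mul1r, gmul_1l. split; auto. apply lecl_one.
    + destruct IH as [E [HE HEl]].
      destruct (split2 u (lprod (v :: l')) q) as [P [HP HPl]].
      exists (gconj E (ginv (npow u (2*q))) ⋆ P). split.
      * change (lprod (map (fun u0 => npow u0 (2 * q)) (u :: v :: l'))) with
          (npow u (2*q) ⋆ lprod (map (fun u0 => npow u0 (2 * q)) (v :: l'))).
        rewrite HE. change (lprod (u :: v :: l')) with (u ⋆ lprod (v :: l')).
        rewrite <- (gmul_assoc G _ P), <- HP. gnorm. auto.
      * replace ((length (u :: v :: l') - 1) * q)%nat with ((length (v :: l') - 1) * q + q)%nat
          by (simpl; lia).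
        apply lecl_mul; auto. apply lecl_conj; auto.
Qed.

Lemma comm_pow (x y : G) q : lecl (npow (gcomm x y) (2*q)) (q + 1).
Proof. destruct (split2 (ginv x) (gconj x y) q) as [P [HP HPl]].
  replace (gcomm x y) with (ginv x ⋆ gconj x y) by (gnorm; auto).
  replace (npow (ginv x ⋆ gconj x y) (2*q)) with (ginv P ⋆ gcomm (npow x (2*q)) y).
  - apply lecl_mul. apply lecl_inv; auto. apply lecl_comm.
  - rewrite npow_inv, npow_conj in HP. apply (f_equal (fun t => ginv P ⋆ t)) in HP.
    rewrite mulVl_r in HP. rewrite <- HP. gnorm. auto.
Qed.

Lemma prod_comms_lprod (l : list (G*G)) : prod_comms G l = lprod (map (fun p => gcomm (fst p) (snd p)) l).
Proof. induction l; simpl; congruence. Qed.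

Lemma pow_prod_comms q (l : list (G*G)) :
  lecl (npow (prod_comms G l) (2*q)) ((length l - 1) * q + length l * (q + 1)).
Proof. rewrite prod_comms_lprod.
  destruct (split_pow q (map (fun p => gcomm (fst p) (snd p)) l)) as [E [HE HEl]].
  rewrite length_map in HEl.
  replace (npow (lprod (map (fun p => gcomm (fst p) (snd p)) l)) (2 * q)) with
    (ginv E ⋆ lprod (map (fun u => npow u (2 * q)) (map (fun p => gcomm (fst p) (snd p)) l))).
  - apply lecl_mul. apply lecl_inv; auto.
    clear. induction l; simpl. apply lecl_one.
    replace (q + 1 + length l * (q + 1))%nat with ((q+1) + length l * (q + 1))%nat by lia.
    apply lecl_mul; auto. apply comm_pow.
  - rewrite HE, mulVl_r. auto.
Qed.

End Lecl.

Section Main.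
Variable G : Group.
Local Notation "x ⋆ y" := (@gmul G x y) (at level 40, left associativity).
Local Notation "1" := (@gone G).

Lemma merge (g : G) (f : nat -> G) (e : nat -> Z) (l : list nat) :
  (forall i, In i l -> exists y, f i = gconj (zpow g (e i)) y) ->
  exists F, lprod G (map f l) = zpow g (fold_right Z.add 0%Z (map e l)) ⋆ F /\ lecl F (length l).
Proof. induction l as [|i l IH]; intros H.
  - exists 1. simpl. rewrite gmul_1l. split; auto. apply lecl_one.
  - destruct (H i (or_introl eq_refl)) as [y Hy].
    destruct IH as [F [HF HFl]]. { intros j Hj. apply H. right. auto. }
    exists (gconj (gcomm (zpow g (e i)) y) (zpow g (fold_right Z.add 0%Z (map e l))) ⋆ F).
    split.
    + simpl. rewrite HF, Hy, zpow_add. gnorm. auto.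
    + replace (length (i :: l)) with (1 + length l)%nat by auto.
      apply lecl_mul; auto. apply lecl_conj, lecl_comm.
Qed.

Lemma gprod_lprod (a : nat -> G) m : gprod a m = lprod G (map a (seq 0 m)).
Proof. unfold gprod, lprod. generalize (seq 0 m). induction l; simpl; congruence. Qed.

Lemma lprod_app (l1 l2 : list G) : lprod G (l1 ++ l2) = lprod G l1 ⋆ lprod G l2.
Proof. induction l1; simpl. rewrite gmul_1l; auto. rewrite IHl1, gmul_assoc; auto. Qed.

Lemma lprod_single (x : G) : lprod G (x :: nil) = x.
Proof. unfold lprod. simpl. apply mul1r. Qed.

Lemma sum_scale (c : Z) (n : nat -> Z) (l : list nat) :
  fold_right Z.add 0%Z (map (fun i => c * n i)%Z l) = (c * fold_right Z.add 0%Z (map n l))%Z.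
Proof. induction l; simpl. lia. rewrite IHl. lia. Qed.

Lemma stepX (a : nat -> G) m k q :
  (1 <= m)%nat -> ~ (m = 1%nat /\ a 0%nat = 1) -> is_prod_comm (gprod a m) k ->
  lecl (lprod G (map (fun i => npow (a i) (2*q)) (seq 0 m))) ((2*k+m-2)*q + k).
Proof. intros Hm Hnot [l [Hl Hp]]. rewrite gprod_lprod in Hp.
  destruct k as [|k'].
  - destruct l; [|simpl in Hl; lia]. change (prod_comms G nil) with (@gone G) in Hp.
    destruct m as [|m']; [lia|]. destruct m' as [|m''].
    + exfalso. apply Hnot. split; auto. simpl in Hp. rewrite mul1r in Hp. auto.
    + set (m' := S m'') in *. rewrite seq_S in Hp |- *. replace (0 + m')%nat with m' in * by lia.
      rewrite map_app in Hp |- *. rewrite lprod_app in Hp |- *. cbn [map] in Hp |- *. rewrite !lprod_single in Hp |- *.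
      destruct (split_pow G q (map a (seq 0 m'))) as [E [HE HEl]].
      rewrite map_map in HE. rewrite HE.
      assert (Hinv : lprod G (map a (seq 0 m')) = ginv (a m')).
      { symmetry in Hp. apply (f_equal (fun t => t ⋆ ginv (a m'))) in Hp.
        rewrite gmul_1l, <- gmul_assoc, mulrV, mul1r in Hp. auto. }
      rewrite Hinv, npow_inv, <- gmul_assoc, gmul_Vl, mul1r.
      rewrite length_map, length_seq in HEl. eapply lecl_mono; [|exact HEl]. nia.
  - pose proof (pow_prod_comms G q l) as Hpc. rewrite Hp, Hl in Hpc.
    destruct (split_pow G q (map a (seq 0 m))) as [E [HE HEl]].
    rewrite map_map in HE. rewrite HE.
    rewrite length_map, length_seq in HEl.
    eapply lecl_mono; [|apply lecl_mul; [exact HEl| exact Hpc]]. nia.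
Qed.

Lemma main_alg (g : G) m (gs : nat -> G) (n : nat -> Z) k q :
  (1 <= m)%nat -> (forall i, (i < m)%nat -> exists x, gs i = gconj g x) ->
  ~ (m = 1%nat /\ zpow (gs 0%nat) (n 0%nat) = 1) ->
  is_prod_comm (gprod (fun i => zpow (gs i) (n i)) m) k ->
  lecl (zpow g (Z.of_nat (2*q) * zsum n m)) ((2*k+m-2)*q + k + m).
Proof. intros Hm Hc Hnot Hk.
  pose proof (stepX (fun i => zpow (gs i) (n i)) m k q Hm Hnot Hk) as HX.
  destruct (merge g (fun i => npow (zpow (gs i) (n i)) (2*q)) (fun i => Z.of_nat (2*q) * n i)%Z (seq 0 m))
    as [F [HF HFl]].
  { intros i Hi. apply in_seq in Hi. destruct (Hc i ltac:(lia)) as [x Hx].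
    exists x. rewrite Hx, npow_zpow, zpow_conj. auto. }
  rewrite sum_scale in HF. unfold zsum.
  replace (zpow g (Z.of_nat (2 * q) * fold_right Z.add 0%Z (map n (seq 0 m))))
    with (lprod G (map (fun i => npow (zpow (gs i) (n i)) (2 * q)) (seq 0 m)) ⋆ ginv F).
  - rewrite length_seq in HFl. apply lecl_mul; auto. apply lecl_inv; auto.
  - rewrite HF, <- gmul_assoc, mulrV, mul1r. auto.
Qed.

Lemma zpow_absnat (g : G) z B : lecl (zpow g z) B -> lecl (npow g (Z.abs_nat z)) B.
Proof. destruct z; simpl; auto. intro H. apply lecl_inv in H. rewrite ginv_inv in H. auto. Qed.

End Main.

Open Scope R_scope.

Lemma real_part (c : nat -> nat) (s : R) (A K2 C : nat) :
  (1 <= A)%nat -> Un_cv (fun n => INR (c n) / INR (S n)) s ->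
  (forall q, (1 <= q)%nat -> (c (2*q*A - 1) <= K2*q + C)%nat) -> s * INR A <= INR K2 / 2.
Proof.
  intros HA Hcv Hb. apply Rnot_lt_le. intro Hlt.
  assert (HAr : 1 <= INR A) by (apply (le_INR 1); auto).
  set (Ar := INR A) in *.
  set (eps := (s*Ar - INR K2/2) / (2*Ar)).
  assert (Heps : 0 < eps) by (unfold eps; apply Rdiv_lt_0_compat; lra).
  destruct (Hcv eps Heps) as [N0 HN0].
  assert (HC0 : 0 <= INR C) by apply pos_INR.
  destruct (archimed_cor1 (eps / (INR C + 1))) as [N1 [H1 H1pos]].
  { apply Rdiv_lt_0_compat; lra. }
  set (q := (N1 + N0)%nat).
  specialize (Hb q ltac:(unfold q; lia)).
  specialize (HN0 (2*q*A - 1)%nat ltac:(unfold q; nia)).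
  unfold R_dist in HN0.
  replace (S (2*q*A - 1)) with (2*q*A)%nat in HN0 by (unfold q; nia).
  apply le_INR in Hb. rewrite plus_INR, mult_INR in Hb.
  rewrite !mult_INR in HN0. fold Ar in HN0. replace (INR 2) with 2 in HN0 by (simpl; lra).
  set (x := INR (c (2*q*A - 1)%nat)) in *.
  assert (HN1 : 0 < INR N1) by (apply (lt_INR 0); auto).
  assert (HQ : INR N1 <= INR q) by (apply le_INR; unfold q; lia).
  set (Q := INR q) in *.
  assert (Hden : 0 < 2 * Q * Ar) by nra.
  assert (Hx : x > (s - eps) * (2 * Q * Ar)).
  { apply Rabs_def2 in HN0. destruct HN0 as [_ Hlow].
    assert (s - eps < x / (2 * Q * Ar)) by lra.
    apply (Rmult_lt_compat_r (2 * Q * Ar)) in H; auto.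
    replace (x / (2 * Q * Ar) * (2 * Q * Ar)) with x in H by (field; lra). lra. }
  assert (Hk : (s - eps) * (2 * Q * Ar) = Q * (s * Ar + INR K2 / 2)).
  { unfold eps. field. lra. }
  assert (Hk2 : 2 * Ar * eps = s * Ar - INR K2 / 2) by (unfold eps; field; lra).
  assert (HC : INR C > Q * (2 * Ar * eps)) by nra.
  assert (HC2 : INR C + 1 < eps * INR N1).
  { apply (Rmult_lt_compat_r (INR N1)) in H1; auto.
    rewrite Rinv_l in H1 by lra. unfold Rdiv in H1.
    apply (Rmult_lt_compat_r (INR C + 1)) in H1; [|lra].
    replace (eps * / (INR C + 1) * INR N1 * (INR C + 1)) with (eps * INR N1) in H1 by (field; lra).
    lra. }
  nra.
Qed.

Theorem corollary2p2 (G : Group) (g : G) (s : R)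
  (hg : in_commutator_subgroup g) (hs : scl_is g s)
  (m : nat) (gs : nat -> G) (n : nat -> Z)
  (hm : (1 <= m)%nat)
  (hconj : forall i, (i < m)%nat -> exists x : G, gs i = gconj g x)
  (hnot : ~ (m = 1%nat /\ zpow (gs 0%nat) (n 0%nat) = gone))
  (k : nat) (hk : cl_is (gprod (fun i => zpow (gs i) (n i)) m) k) :
  INR k >= s * Rabs (IZR (zsum n m)) - INR m / 2 + 1.
Proof.
  destruct hk as [hk1 hk2]. destruct hs as [c [hc hcv]].
  assert (H2k : (2 <= 2*k + m)%nat).
  { destruct k; [|lia]. destruct (Nat.eq_dec m 1) as [->|]; [exfalso|lia].
    apply hnot. split; auto. destruct hk1 as [l [Hl Hp]]. destruct l; [|simpl in Hl; lia].
    simpl in Hp. unfold gprod in Hp. simpl in Hp. rewrite mul1r in Hp. auto. }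
  assert (HR2 : INR (2*k+m) >= 2) by (apply Rle_ge; apply (le_INR 2); auto).
  rewrite plus_INR, mult_INR in HR2. simpl (INR 2) in HR2.
  destruct (Z.eq_dec (zsum n m) 0) as [HN|HN].
  - rewrite HN, Rabs_R0. lra.
  - set (A := Z.abs_nat (zsum n m)).
    assert (HA : (1 <= A)%nat) by (unfold A; lia).
    assert (Hs := real_part c s A (2*k+m-2) (k+m) HA hcv).
    assert (Hb : forall q, (1 <= q)%nat -> (c (2*q*A - 1) <= (2*k+m-2)*q + (k+m))%nat).
    { intros q Hq.
      pose proof (main_alg G g m gs n k q hm hconj hnot hk1) as Hl.
      apply zpow_absnat in Hl.
      replace (Z.abs_nat (Z.of_nat (2 * q) * zsum n m)) with (S (2*q*A - 1)) in Hl
        by (unfold A; rewrite Zabs2Nat.inj_mul, Zabs2Nat.id; nia).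
      destruct Hl as [j [Hj Hpj]]. destruct (hc (2*q*A-1)%nat) as [_ Hmin].
      specialize (Hmin j Hpj). lia. }
    specialize (Hs Hb).
    rewrite minus_INR in Hs by lia. rewrite plus_INR, mult_INR in Hs. simpl (INR 2) in Hs.
    assert (HAbs : Rabs (IZR (zsum n m)) = INR A).
    { unfold A. rewrite INR_IZR_INZ, Nat2Z.inj_abs_nat, abs_IZR. auto. }
    rewrite HAbs. lra.
Qed.
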